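(* Let $M\ge 1$, let $A$ be a real $M\times M$ matrix, let $g,U_0\in\mathbb{R}^M$, let $T>0$, and let $I$ denote the $M\times M$ identity matrix. Assume there exists a diagonal matrix $D\in\mathbb{R}^{M\times M}$ with positive diagonal entries such that $DA+A^{\mathrm T}D$ is negative semidefinite. For an integer $N\ge1$ put $\Delta t=T/N$ and consider the following two processes (all inequalities between vectors are componentwise, and maxima of vectors are componentwise). (Exact process, backward Euler LCP.) Vectors $U_n,\lambda_n\in\mathbb{R}^M$, $n=1,\dots,N$, satisfy, successively for $n=1,\dots,N$, $$(I-\Delta t A)U_n = U_{n-1}+\Delta t\, g+\Delta t\,\lambda_n,\qquad \lambda_n\ge 0,\quad U_n\ge U_0,\quad (U_n-U_0)^{\mathrm T}\lambda_n=0 .$$ (Ikonen--Toivanen splitting process.) Set $\widehat U_0=U_0$ and $\widehat\lambda_0=0$, and for $n=1,\dots,N$ let $\bar\lambda_n=\widehat\lambda_{n-1}$, let $\bar U_n$ solve $$(I-\Delta t A)\bar U_n=\widehat U_{n-1}+\Delta t\, g+\Delta t\,\bar\lambda_n,$$ and let $\widehat U_n,\widehat\lambda_n\in\mathbb{R}^M$ satisfy $$\widehat U_n-\bar U_n-\Delta t\,(\widehat\lambda_n-\bar\lambda_n)=0,\qquad \widehat\lambda_n\ge0,\quad \widehat U_n\ge U_0,\quad (\widehat U_n-U_0)^{\mathrm T}\widehat\lambda_n=0.$$ Assume further that there is a real constant $\nu$, independent of $\Delta t>0$, such that $$\|\lambda_1\|_D+\sum_{n=2}^{N}\|\lambda_n-\lambda_{n-1}\|_D\le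 \nu .$$ Then $$\max_{1\le n\le N}\|U_n-\widehat U_n\|_D\le \nu\,\Delta t$$ whenever $\Delta t=T/N$ with integer $N\ge1$.
   Context: For a diagonal matrix $D$ with positive diagonal entries, the scaled inner product on $\mathbb{R}^M$ is $\langle x,y\rangle_D=y^{\mathrm T}Dx$, and $\|x\|_D=\sqrt{\langle x,x\rangle_D}=\sqrt{x^{\mathrm T}Dx}$ is the induced vector norm. The exact process is the backward Euler ($\theta=1$) time discretization of the semidiscrete complementarity problem $U'\ge AU+g$, $U\ge U_0$, $(U-U_0)^{\mathrm T}(U'-AU-g)=0$, written with an auxiliary (Lagrange multiplier) vector $\lambda_n$; the splitting process replaces it by a linear solve followed by a componentwise update, with the multiplier of the previous step used as $\bar\lambda_n$. *)

(* Defs.v *)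
From HB Require Import structures.
From mathcomp Require Import all_boot all_order all_algebra.
Set Implicit Arguments. Unset Strict Implicit. Unset Printing Implicit Defensive.
Import Order.TTheory GRing.Theory Num.Theory.
Local Open Scope ring_scope.

Definition vge (R : realFieldType) (M : nat) (x y : 'cV[R]_M) : Prop :=
  forall i : 'I_M, y i 0 <= x i 0.

Definition dotD (R : realFieldType) (M : nat) (D : 'M[R]_M) (x y : 'cV[R]_M) : R :=
  (y^T *m D *m x) 0 0.

Definition normD (R : rcfType) (M : nat) (D : 'M[R]_M) (x : 'cV[R]_M) : R :=
  Num.sqrt (dotD D x x).

Definition neg_semidef (R : realFieldType) (M : nat) (B : 'M[R]_M) : Prop :=
  forall x : 'cV[R]_M, (x^T *m B *m x) 0 0 <= 0.

(* Main.v *)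
Require Import Defs.
From HB Require Import structures.
From mathcomp Require Import all_boot all_order all_algebra.
From mathcomp Require Import ring lra.
Set Implicit Arguments. Unset Strict Implicit. Unset Printing Implicit Defensive.
Import Order.TTheory GRing.Theory Num.Theory.
Local Open Scope ring_scope.

Definition dq (R : rcfType) (M : nat) (d : 'I_M -> R) (x y : 'cV[R]_M) : R :=
  \sum_i d i * x i 0 * y i 0.
Definition nq (R : rcfType) (M : nat) (d : 'I_M -> R) (x : 'cV[R]_M) : R :=
  Num.sqrt (dq d x x).

Lemma dotD_dq (R : rcfType) (M : nat) (d : 'I_M -> R) (x y : 'cV[R]_M) :
  dotD (diag_mx (\row_i d i)) x y = dq d x y.
Proof.
rewrite /dotD /dq mul_mx_diag !mxE; apply: eq_bigr => i _; rewrite !mxE; ring.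
Qed.

Lemma dot1 (R : rcfType) (M : nat) (x y : 'cV[R]_M) :
  dotD 1%:M x y = \sum_i x i 0 * y i 0.
Proof.
rewrite /dotD mulmx1 !mxE; apply: eq_bigr => i _; rewrite !mxE; ring.
Qed.

Lemma dq_sym (R : rcfType) (M : nat) (d : 'I_M -> R) (x y : 'cV[R]_M) :
  dq d x y = dq d y x.
Proof. by apply: eq_bigr => i _; ring. Qed.

Lemma dqDl (R : rcfType) (M : nat) (d : 'I_M -> R) (x y z : 'cV[R]_M) :
  dq d (x + y) z = dq d x z + dq d y z.
Proof. rewrite /dq -big_split; apply: eq_bigr => i _; rewrite !mxE /=; ring. Qed.

Lemma dqNl (R : rcfType) (M : nat) (d : 'I_M -> R) (x z : 'cV[R]_M) :
  dq d (- x) z = - dq d x z.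
Proof. rewrite /dq -sumrN; apply: eq_bigr => i _; rewrite !mxE; ring. Qed.

Lemma dqZl (R : rcfType) (M : nat) (d : 'I_M -> R) (c : R) (x z : 'cV[R]_M) :
  dq d (c *: x) z = c * dq d x z.
Proof. rewrite /dq mulr_sumr; apply: eq_bigr => i _; rewrite !mxE; ring. Qed.

Lemma dqDr (R : rcfType) (M : nat) (d : 'I_M -> R) (x y z : 'cV[R]_M) :
  dq d z (x + y) = dq d z x + dq d z y.
Proof. by rewrite !(dq_sym d z) dqDl. Qed.
Lemma dqNr (R : rcfType) (M : nat) (d : 'I_M -> R) (x z : 'cV[R]_M) :
  dq d z (- x) = - dq d z x.
Proof. by rewrite !(dq_sym d z) dqNl. Qed.
Lemma dqZr (R : rcfType) (M : nat) (d : 'I_M -> R) (c : R) (x z : 'cV[R]_M) :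
  dq d z (c *: x) = c * dq d z x.
Proof. by rewrite !(dq_sym d z) dqZl. Qed.

Lemma dq_ge0 (R : rcfType) (M : nat) (d : 'I_M -> R) (x : 'cV[R]_M) :
  (forall i, 0 < d i) -> 0 <= dq d x x.
Proof.
move=> hd; apply: sumr_ge0 => i _; have := hd i; nra.
Qed.

Lemma dq_eq0 (R : rcfType) (M : nat) (d : 'I_M -> R) (x : 'cV[R]_M) :
  (forall i, 0 < d i) -> dq d x x = 0 -> x = 0.
Proof.
move=> hd H; apply/matrixP => i j; rewrite (ord1 j) mxE.
have H2 : d i * x i 0 * x i 0 = 0.
  apply: (psumr_eq0P (P := predT) (F := fun i => d i * x i 0 * x i 0)) => //.
  by move=> k _; have := hd k; nra.
by move/eqP: H2; rewrite -mulrA mulf_eq0 (gt_eqF (hd i)) /= mulf_eq0 orbb => /eqP.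
Qed.

Lemma nq_ge0 (R : rcfType) (M : nat) (d : 'I_M -> R) (x : 'cV[R]_M) :
  0 <= nq d x.
Proof. exact: sqrtr_ge0. Qed.

Lemma nq_sq (R : rcfType) (M : nat) (d : 'I_M -> R) (x : 'cV[R]_M) :
  (forall i, 0 < d i) -> nq d x ^+ 2 = dq d x x.
Proof. by move=> hd; rewrite sqr_sqrtr // dq_ge0. Qed.

Lemma nq_le (R : rcfType) (M : nat) (d : 'I_M -> R) (x y : 'cV[R]_M) :
  dq d x x <= dq d y y -> nq d x <= nq d y.
Proof. exact: ler_wsqrtr. Qed.

Lemma nqZ (R : rcfType) (M : nat) (d : 'I_M -> R) (c : R) (x : 'cV[R]_M) :
  (forall i, 0 < d i) -> nq d (c *: x) = `|c| * nq d x.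
Proof.
move=> hd; rewrite /nq dqZl dqZr mulrA -expr2 sqrtrM ?sqrtr_sqr //.
by rewrite sqr_ge0.
Qed.

Lemma nq_CS (R : rcfType) (M : nat) (d : 'I_M -> R) (x y : 'cV[R]_M) :
  (forall i, 0 < d i) -> dq d x y <= nq d x * nq d y.
Proof.
move=> hd.
have ha := nq_sq x hd; have hb := nq_sq y hd.
have a0 := nq_ge0 d x; have b0 := nq_ge0 d y.
set a := nq d x in ha a0 *; set b := nq d y in hb b0 *.
have H := dq_ge0 (b *: x - a *: y) hd.
rewrite !(dqDl, dqDr, dqNl, dqNr, dqZl, dqZr) in H.
rewrite (dq_sym d y x) in H.
have [a0'|ap] := eqVneq a 0.
  have x0 : x = 0 by apply: (dq_eq0 hd); rewrite -ha a0'; ring.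
  by rewrite x0 /dq big1 ?a0' ?mul0r // => i _; rewrite mxE; ring.
have [b0'|bp] := eqVneq b 0.
  have y0 : y = 0 by apply: (dq_eq0 hd); rewrite -hb b0'; ring.
  by rewrite y0 /dq big1 ?b0' ?mulr0 // => i _; rewrite mxE; ring.
have abp : 0 < a * b by rewrite mulr_gt0 // lt0r ?ap ?bp.
rewrite -ha -hb in H.
have : a * b * (dq d x y) <= a * b * (a * b) by nra.
by rewrite ler_pM2l.
Qed.

Lemma nq_tri (R : rcfType) (M : nat) (d : 'I_M -> R) (x y : 'cV[R]_M) :
  (forall i, 0 < d i) -> nq d (x + y) <= nq d x + nq d y.
Proof.
move=> hd.
have ha := nq_sq x hd; have hb := nq_sq y hd; have hc := nq_CS x y hd.
have a0 := nq_ge0 d x; have b0 := nq_ge0 d y.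
rewrite {1}/nq -(ger0_norm (addr_ge0 a0 b0)) -sqrtr_sqr; apply: ler_wsqrtr.
rewrite !(dqDl, dqDr) (dq_sym d y x).
nra.
Qed.
Lemma dis_bounds (R : rcfType) (M : nat) (d : 'I_M -> R) (B : 'M[R]_M) (y : 'cV[R]_M) :
  (forall i, 0 < d i) -> (forall y, dq d (B *m y) y <= 0) ->
  [/\ dq d ((1%:M + B) *m y) ((1%:M + B) *m y) <= dq d ((1%:M - B) *m y) ((1%:M - B) *m y),
      dq d (B *m y) (B *m y) <= dq d ((1%:M - B) *m y) ((1%:M - B) *m y) &
      dq d y y <= dq d ((1%:M - B) *m y) ((1%:M - B) *m y)].
Proof.
move=> hd hB; rewrite mulmxDl mulmxBl mul1mx.
rewrite !(dqDl, dqDr, dqNl, dqNr) (dq_sym d y (B *m y)).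
have := hB y; have := dq_ge0 (B *m y) hd; have := dq_ge0 y hd.
move=> h1 h2 h3; split; lra.
Qed.

Lemma unit_IB (R : rcfType) (M : nat) (d : 'I_M -> R) (B : 'M[R]_M) :
  (forall i, 0 < d i) -> (forall y, dq d (B *m y) y <= 0) ->
  (1%:M - B) \in unitmx.
Proof.
move=> hd hB; rewrite unitmxE unitfE -det_tr; apply/negP => /det0P [v vn0 hv].
have h0 : (1%:M - B) *m v^T = 0.
  have : (v *m (1%:M - B)^T)^T = 0 by rewrite hv trmx0.
  by rewrite trmx_mul trmxK.
have [_ _ h3] := dis_bounds v^T hd hB.
rewrite h0 in h3.
have hz : dq d (0 : 'cV[R]_M) 0 = 0 by rewrite /dq big1 // => i _; rewrite mxE; ring.
rewrite hz in h3.
have vt0 : v^T = 0.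
  by apply: (dq_eq0 hd); apply/eqP; rewrite eq_le h3 dq_ge0.
move/negP: vn0; apply; apply/eqP; by rewrite -(trmxK v) vt0 trmx0.
Qed.

Lemma comm1 (R : rcfType) (M : nat) (B : 'M[R]_M) (z : 'cV[R]_M) :
  (1%:M - B) *m ((1%:M + B) *m z) = (1%:M + B) *m ((1%:M - B) *m z).
Proof.
rewrite !mulmxA; congr (_ *m _).
rewrite !(mulmxBl, mulmxDr, mulmxDl, mulmxBr, mul1mx, mulmx1, mulNmx, mulmxN).
apply/matrixP => i j; rewrite !mxE; lra.
Qed.

Lemma comm2 (R : rcfType) (M : nat) (B : 'M[R]_M) (z : 'cV[R]_M) :
  (1%:M - B) *m (B *m z) = B *m ((1%:M - B) *m z).
Proof.
rewrite !mulmxA; congr (_ *m _).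
by rewrite !(mulmxBl, mulmxBr, mul1mx, mulmx1).
Qed.

Lemma key_step (R : rcfType) (M : nat) (d : 'I_M -> R) (B : 'M[R]_M)
  (x p q e : 'cV[R]_M) :
  (forall i, 0 < d i) -> (forall y, dq d (B *m y) y <= 0) ->
  (1%:M - B) *m x = (1/2) *: ((1%:M - B) *m p) + (1/2) *: ((1%:M + B) *m q) + B *m e ->
  dq d q q <= dq d p p ->
  nq d x <= nq d p + nq d e.
Proof.
move=> hd hB hx hqp.
have hu := unit_IB hd hB.
set L := 1%:M - B in hu hx.
set wq := invmx L *m q; set we := invmx L *m e.
have Lwq : L *m wq = q by rewrite /wq mulKVmx.
have Lwe : L *m we = e by rewrite /we mulKVmx.
have xE : x = (1/2) *: p + (1/2) *: ((1%:M + B) *m wq) + B *m we.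
  rewrite -[x](mulKmx hu) hx -[RHS](mulKmx hu); congr (_ *m _).
  have Lwq' : (1%:M - B) *m wq = q := Lwq.
  have Lwe' : (1%:M - B) *m we = e := Lwe.
  by rewrite !mulmxDr -!scalemxAr /L comm1 comm2 Lwq' Lwe'.
have [b1 _ _] := dis_bounds wq hd hB.
have [_ b2 _] := dis_bounds we hd hB.
have Lwq2 : (1%:M - B) *m wq = q := Lwq.
have Lwe2 : (1%:M - B) *m we = e := Lwe.
rewrite Lwq2 in b1; rewrite Lwe2 in b2.
have t1 := nq_tri ((1/2) *: p + (1/2) *: ((1%:M + B) *m wq)) (B *m we) hd.
have t2 := nq_tri ((1/2) *: p) ((1/2) *: ((1%:M + B) *m wq)) hd.
rewrite !nqZ // in t2.
have n1 := nq_le b1; have n2 := nq_le b2; have n3 := nq_le hqp.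
have h2 : `|1/2 : R| = 1/2 by rewrite ger0_norm // divr_ge0.
rewrite h2 in t2.
rewrite xE; lra.
Qed.
Lemma step_id (R : rcfType) (M : nat) (A : 'M[R]_M) (dt : R)
  (Un Un1 Uhn Uhn1 Ubn g ln ln1 lhn lhn1 : 'cV[R]_M) :
  (1%:M - dt *: A) *m Un = Un1 + dt *: g + dt *: ln ->
  (1%:M - dt *: A) *m Ubn = Uhn1 + dt *: g + dt *: lhn1 ->
  Uhn - Ubn - dt *: (lhn - lhn1) = 0 ->
  (1%:M - dt *: A) *m ((Un - Uhn) - dt *: (ln - lhn)) =
   (1/2) *: ((1%:M - dt *: A) *m ((Un1 - Uhn1) - dt *: (ln1 - lhn1)))
   + (1/2) *: ((1%:M + dt *: A) *m ((Un1 - Uhn1) + dt *: (ln1 - lhn1)))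
   + (dt *: A) *m (dt *: (ln - ln1)).
Proof.
move=> H1 H2 H3.
have E : Ubn = Uhn - dt *: (lhn - lhn1).
  apply/matrixP => i j; move/matrixP: H3 => /(_ i j); rewrite !mxE; lra.
rewrite E in H2.
rewrite !(mulmxBl, mulmxDl, mul1mx, mulNmx) -!scalemxAl in H1 H2 *.
rewrite !(mulmxDr, mulmxBr, mulmxN) -!scalemxAr !(mulmxDr, mulmxBr, mulmxN) in H1 H2 *.
apply/matrixP => i j; move/matrixP: H1 => /(_ i j); move/matrixP: H2 => /(_ i j).
rewrite !mxE => H2 H1.
lra.
Qed.
Lemma sign_le (R : rcfType) (M : nat) (d : 'I_M -> R) (x y : 'cV[R]_M) :
  (forall i, 0 < d i) -> (forall i, x i 0 * y i 0 <= 0) ->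
  dq d (x + y) (x + y) <= dq d (x - y) (x - y) /\ dq d x x <= dq d (x - y) (x - y).
Proof.
move=> hd hs; split; apply: ler_sum => i _; rewrite !mxE;
  have := hd i; have := hs i; nra.
Qed.

Lemma compl_i (R : rcfType) (M : nat) (u l U0 : 'cV[R]_M) (i : 'I_M) :
  vge l 0 -> vge u U0 -> dotD 1%:M (u - U0) l = 0 ->
  [/\ 0 <= l i 0, U0 i 0 <= u i 0 & (u i 0 - U0 i 0) * l i 0 = 0].
Proof.
move=> hl hu hc.
have hl' : forall k, 0 <= l k 0 by move=> k; have := hl k; rewrite mxE.
split => //.
rewrite dot1 in hc.
have h : (u - U0) i 0 * l i 0 = 0.
  apply: (psumr_eq0P (P := predT) (F := fun k => (u - U0) k 0 * l k 0)) => //.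
  by move=> k _ /=; rewrite !mxE; have := hl' k; have := hu k; nra.
by rewrite !mxE in h.
Qed.

Theorem theorem1 (R : rcfType) (M : nat) (A : 'M[R]_M) (g U0 : 'cV[R]_M)
  (T : R) (d : 'I_M -> R) (nu : R) (N : nat)
  (U lam Ub Uh lh : nat -> 'cV[R]_M) :
  (0 < M)%N -> 0 < T ->
  (forall i, 0 < d i) ->
  neg_semidef (diag_mx (\row_i d i) *m A + A^T *m diag_mx (\row_i d i)) ->
  (1 <= N)%N ->
  let dt := T / N%:R in
  let D := diag_mx (\row_i d i) in
  (* exact process: backward Euler LCP *)
  U 0%N = U0 ->
  (forall n, (1 <= n <= N)%N ->
     (1%:M - dt *: A) *m U n = U n.-1 + dt *: g + dt *: lam n /\
     vge (lam n) 0 /\ vge (U n) U0 /\ dotD 1%:M (U n - U0) (lam n) = 0) ->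
  (* Ikonen--Toivanen splitting process *)
  Uh 0%N = U0 -> lh 0%N = 0 ->
  (forall n, (1 <= n <= N)%N ->
     (1%:M - dt *: A) *m Ub n = Uh n.-1 + dt *: g + dt *: lh n.-1 /\
     Uh n - Ub n - dt *: (lh n - lh n.-1) = 0 /\
     vge (lh n) 0 /\ vge (Uh n) U0 /\ dotD 1%:M (Uh n - U0) (lh n) = 0) ->
  normD D (lam 1%N) + \sum_(2 <= n < N.+1) normD D (lam n - lam n.-1) <= nu ->
  \big[Num.max/0]_(1 <= n < N.+1) normD D (U n - Uh n) <= nu * dt.
Proof.
move=> M0 T0 hd hneg N1 dt D U00 Hex Uh0 lh0 Hsp Hnu.
have dt0 : 0 < dt by rewrite /dt divr_gt0 // ltr0n.
have hB : forall y, dq d ((dt *: A) *m y) y <= 0.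
  move=> y.
  have e1 : (y^T *m (D *m A) *m y) 0 0 = dq d (A *m y) y.
    by rewrite -dotD_dq /dotD !mulmxA.
  have e2 : (y^T *m (A^T *m D) *m y) 0 0 = dq d y (A *m y).
    by rewrite -dotD_dq /dotD trmx_mul !mulmxA.
  have := hneg y; rewrite -/D mulmxDr mulmxDl [X in X <= _]mxE e1 e2 dq_sym.
  rewrite -scalemxAl dqZl (dq_sym d (A *m y)); nra.
pose lm := fun n => if n is 0 then 0 else lam n.
pose a := fun n => U n - Uh n.
pose b := fun n => dt *: (lm n - lh n).
pose p := fun n => a n - b n.
pose q := fun n => a n + b n.
pose de := fun n => dt *: (lm n - lm n.-1).
have hsign : forall n, (1 <= n <= N)%N ->
    dq d (q n) (q n) <= dq d (p n) (p n) /\ dq d (a n) (a n) <= dq d (p n) (p n).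
  move=> n hn; apply: sign_le => // i.
  have [_ [hl1 [hu1 hc1]]] := Hex n hn.
  have [_ [_ [hl2 [hu2 hc2]]]] := Hsp n hn.
  have [c1 c2 c3] := compl_i i hl1 hu1 hc1.
  have [c4 c5 c6] := compl_i i hl2 hu2 hc2.
  have lmn : lm n = lam n by rewrite /lm; case: (n) hn.
  rewrite /a /b lmn !mxE.
  have : (U n i 0 - Uh n i 0) * (lam n i 0 - lh n i 0) <= 0 by nra.
  nra.
have hp0 : p 0%N = 0.
  by rewrite /p /a /b /= U00 Uh0 lh0 !subrr scaler0 subrr.
have hq0 : q 0%N = 0.
  by rewrite /q /a /b /= U00 Uh0 lh0 !subrr scaler0 addr0.
have hstep : forall n, (n < N)%N ->
    (1%:M - dt *: A) *m p n.+1 = (1/2) *: ((1%:M - dt *: A) *m p n)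
      + (1/2) *: ((1%:M + dt *: A) *m q n) + (dt *: A) *m de n.+1.
  move=> n hn.
  have hn' : (1 <= n.+1 <= N)%N by rewrite hn.
  have [H1 _] := Hex n.+1 hn'.
  have [H2 [H3 _]] := Hsp n.+1 hn'.
  have := step_id (lm n) H1 H2 H3. by rewrite /p /q /a /b /de /=.
have hind : forall n, (n <= N)%N -> nq d (p n) <= \sum_(1 <= k < n.+1) nq d (de k).
  elim => [|n IH] hn.
    by rewrite hp0 big_geq // /nq /dq big1 ?sqrtr0 // => i _; rewrite mxE; ring.
  have hnN : (n < N)%N by [].
  have hk := key_step hd hB (hstep n hnN).
  have hqp : dq d (q n) (q n) <= dq d (p n) (p n).
    case: n IH hn hnN hk => [|n] IH hn hnN hk; first by rewrite hp0 hq0.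
    by have [] := hsign n.+1 (ltnW hnN).
  have := hk hqp; have := IH (ltnW hnN).
  rewrite (big_nat_recr n.+1) //=; lra.
have hSN : \sum_(1 <= k < N.+1) nq d (de k) <= nu * dt.
  rewrite big_ltn // /de /= subr0 nqZ // (ger0_norm (ltW dt0)) //.
  rewrite (eq_big_nat _ _ (F2 := fun k => dt * nq d (lam k - lam k.-1))); last first.
    by move=> k /andP [hk _]; case: k hk => [|[|k]] // _; rewrite nqZ // (ger0_norm (ltW dt0)).
  rewrite -mulr_sumr -mulrDr [nu * dt]mulrC ler_pM2l //.
  move: Hnu; rewrite /normD /D !dotD_dq.
  by rewrite (eq_big_nat _ _ (F2 := fun k => nq d (lam k - lam k.-1))) //;
    move=> k _; rewrite dotD_dq.
have hnu0 : 0 <= nu * dt.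
  apply: le_trans hSN; apply: sumr_ge0 => k _; exact: nq_ge0.
rewrite big_nat_cond; apply: bigmax_le => // n /andP [hn _].
have hnN : (n <= N)%N by case/andP: hn.
rewrite /normD /D dotD_dq -/(nq d (U n - Uh n)).
have hS : \sum_(1 <= k < n.+1) nq d (de k) <= \sum_(1 <= k < N.+1) nq d (de k).
  rewrite [X in _ <= X](big_cat_nat _ (n := n.+1)) ?ltnS //=.
  by rewrite lerDl; apply: sumr_ge0 => k _; exact: nq_ge0.
apply: (le_trans _ hSN); apply: (le_trans _ hS); apply: (le_trans _ (hind n hnN)).
have [_ h2] := hsign n hn.
exact: (nq_le h2).
Qed.
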